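(* Let $a\le b<\infty$ and $\beta,\eta,\nu>0$ with $\eta^2<2\beta\nu$, and set $\mu=\eta/\nu$, $\sigma=2\beta/\nu$. Consider the problem $$\sup_f\ \int_a^\infty \mathbb{I}(x>b)f(x)\,dx\quad\text{s.t.}\quad \int_a^\infty f(x)dx=\beta,\ \ f(a)=f(a+)=\eta,\ \ f'_+(a)\ge-\nu,\ \ f\text{ convex on }[a,\infty),\ \ f\ge0\text{ on }[a,\infty),$$ over functions $f:[a,\infty)\to\mathbb{R}$, and denote its optimal value by $z^*=z^*(a,b)$. Then $$z^*=\begin{cases}\frac{\nu}{2}(\sigma-\mu^2) & \text{if }\mu\le b-a,\\ \frac{\nu}{2}\big[\sigma-2(b-a)\mu+(b-a)^2\big]&\text{if }\mu>b-a.\end{cases}$$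
   Context: $f(a+)$ denotes the right limit of $f$ at $a$ and $f'_+$ the right derivative. *)

(* Defs.v *)
From Stdlib Require Import Reals.
From Coquelicot Require Import Coquelicot.
Open Scope R_scope.

Definition convex_on_from (f : R -> R) (a : R) : Prop :=
  forall x y t, a <= x -> a <= y -> 0 <= t <= 1 ->
    f (t * x + (1 - t) * y) <= t * f x + (1 - t) * f y.

Definition right_limit (f : R -> R) (a eta : R) : Prop :=
  filterlim f (at_right a) (locally eta).

Definition right_deriv_ge (f : R -> R) (a c : R) : Prop :=
  exists l : Rbar,
    filterlim (fun h => (f (a + h) - f a) / h) (at_right 0) (Rbar_locally l)
    /\ Rbar_le (Finite c) l.

Definition ind_gt (b : R) (f : R -> R) : R -> R :=
  fun x => if Rlt_dec b x then f x else 0.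

Definition feasible (a beta eta nu : R) (f : R -> R) : Prop :=
  is_RInt_gen f (at_point a) (Rbar_locally p_infty) beta /\
  f a = eta /\ right_limit f a eta /\
  right_deriv_ge f a (- nu) /\
  convex_on_from f a /\
  (forall x, a <= x -> 0 <= f x).

Definition objective_values (a b beta eta nu : R) : R -> Prop :=
  fun z => exists f, feasible a beta eta nu f /\
    is_RInt_gen (ind_gt b f) (at_point a) (Rbar_locally p_infty) z.

Definition zstar (a b beta eta nu : R) : Rbar :=
  Lub_Rbar (objective_values a b beta eta nu).

(* Main.v *)
Require Import Defs.
From Stdlib Require Import Reals Lra Psatz.
From Coquelicot Require Import Coquelicot.
Open Scope R_scope.

Lemma affine_int (p q r x1 x2 : R) :
  is_RInt (fun x => p - q * (x - r)) x1 x2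
    (p * (x2 - x1) - q * ((x2 - r) ^ 2 - (x1 - r) ^ 2) / 2).
Proof.
  pose (Fa0 := fun x => p * x - q * (x - r) ^ 2 / 2).
  replace (p * (x2 - x1) - q * ((x2 - r) ^ 2 - (x1 - r) ^ 2) / 2)
    with (minus (Fa0 x2) (Fa0 x1)) by (unfold Fa0, minus, plus, opp; simpl; field).
  apply (@is_RInt_derive R_CompleteNormedModule Fa0).
  - intros x _. unfold Fa0. auto_derive; auto. field.
  - intros x _. apply (ex_derive_continuous (fun x0 => p - q * (x0 - r))).
    auto_derive; auto.
Qed.

Lemma is_RInt_zero (x1 x2 : R) : is_RInt (fun _ => 0) x1 x2 0.
Proof.
  pose proof (affine_int 0 0 0 x1 x2) as H.
  replace (0 * (x2 - x1) - 0 * ((x2 - 0) ^ 2 - (x1 - 0) ^ 2) / 2) with 0 in H by field.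
  eapply is_RInt_ext. 2: exact H. intros; simpl; ring.
Qed.

Lemma gen_ex (f : R -> R) (a l : R) :
  is_RInt_gen f (at_point a) (Rbar_locally p_infty) l ->
  forall b, a <= b -> ex_RInt f a b.
Proof.
  intros H b Hb.
  assert (K := H (fun _ => True) (filter_true)).
  destruct K as [Q R HQ HR HP]. destruct HR as [M HM].
  pose (y := Rmax b (M + 1)).
  destruct (HP a y HQ) as [v [Hv _]].
  apply HM. unfold y. generalize (Rmax_r b (M+1)). lra.
  apply (@ex_RInt_Chasles_1 R_CompleteNormedModule f a b y). split; auto. unfold y; apply Rmax_l.
  exists v; exact Hv.
Qed.

Lemma zformula (f : R -> R) (a b beta : R) :
  a <= b ->
  is_RInt_gen f (at_point a) (Rbar_locally p_infty) beta ->
  is_RInt_gen (ind_gt b f) (at_point a) (Rbar_locally p_infty)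
     (beta - RInt f a b).
Proof.
  intros Hab H.
  assert (Ex := gen_ex f a beta H b Hab).
  assert (H1 := RInt_correct f a b Ex).
  set (c := RInt f a b) in *.
  assert (H2 : is_RInt_gen f (at_point b) (at_point a) (opp c)).
  { apply is_RInt_gen_at_point. apply (@is_RInt_swap R_NormedModule). exact H1. }
  assert (H3 := is_RInt_gen_Chasles _ _ _ _ H2 H).
  assert (H4 : is_RInt_gen (ind_gt b f) (at_point b) (Rbar_locally p_infty) (plus (opp c) beta)).
  { eapply is_RInt_gen_ext; [ | exact H3].
    apply Filter_prod with (fun x => x = b) (fun y => b < y).
    reflexivity. exists b. auto.
    intros x y -> Hy z Hz. simpl in Hz.
    rewrite Rmin_left in Hz by lra. rewrite Rmax_right in Hz by lra.
    unfold ind_gt. destruct (Rlt_dec b z); [reflexivity| lra]. }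
  assert (H5 : is_RInt_gen (ind_gt b f) (at_point a) (at_point b) 0).
  { apply is_RInt_gen_at_point. eapply is_RInt_ext. 2: apply is_RInt_zero.
    intros z Hz. rewrite Rmin_left in Hz by lra. rewrite Rmax_right in Hz by lra.
    unfold ind_gt. destruct (Rlt_dec b z); [lra| reflexivity]. }
  assert (H6 := is_RInt_gen_Chasles _ _ _ _ H5 H4).
  replace (beta - c) with (plus 0 (plus (opp c) beta)).
  exact H6. unfold plus, opp; simpl. ring.
Qed.

Lemma lin_lb (f : R -> R) (a beta eta nu : R) :
  feasible a beta eta nu f -> forall x, a <= x -> eta - nu * (x - a) <= f x.
Proof.
  intros [_ [Hfa [_ [[l [Hl Hle]] [Hconv _]]]]] x Hx.
  destruct (Req_dec x a) as [->|Hxa]. rewrite Hfa. lra.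
  assert (HD : 0 < x - a) by lra.
  destruct (Rle_lt_dec (eta - nu * (x - a)) (f x)) as [ok|Hbad]; auto.
  exfalso.
  pose (k := (f x - eta) / (x - a)).
  assert (Hk : k < - nu).
  { unfold k. apply Rmult_lt_reg_r with (x - a); auto.
    unfold Rdiv. rewrite Rmult_assoc, Rinv_l by lra. lra. }
  assert (Hev : at_right 0 (fun h => k < (f (a + h) - f a) / h)).
  { apply Hl. destruct l as [l| |]; simpl in Hle.
    - apply (open_Rbar_gt' (Finite l) (Finite k)). simpl. lra.
    - apply (open_Rbar_gt' p_infty (Finite k)). simpl. auto.
    - contradiction. }
  destruct Hev as [e He].
  pose (h := Rmin (e / 2) (x - a)).
  assert (Hh0 : 0 < h).
  { unfold h. apply Rmin_pos. generalize (cond_pos e); lra. lra. }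
  assert (Hhx : h <= x - a) by apply Rmin_r.
  assert (Hhe : h < e).
  { unfold h. generalize (Rmin_l (e/2) (x-a)) (cond_pos e). lra. }
  assert (H1 := He h).
  assert (H2 : k < (f (a + h) - f a) / h).
  { apply H1; auto. unfold ball; simpl; unfold AbsRing_ball, abs, minus, plus, opp; simpl.
    rewrite Ropp_0, Rplus_0_r, Rabs_right; lra. }
  pose (t := h / (x - a)).
  assert (Ht : 0 <= t <= 1).
  { unfold t. split. apply Rlt_le, Rdiv_lt_0_compat; lra.
    apply Rmult_le_reg_r with (x - a); auto. unfold Rdiv. rewrite Rmult_assoc, Rinv_l by lra. lra. }
  assert (Hc := Hconv x a t Hx (Rle_refl a) Ht).
  replace (t * x + (1 - t) * a) with (a + h) in Hc by (unfold t; field; lra).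
  rewrite Hfa in Hc, H2.
  assert (H3 : f (a + h) - eta <= t * (f x - eta)) by lra.
  assert (H4 : (f (a + h) - eta) / h <= k).
  { unfold k. apply Rmult_le_reg_r with h; auto.
    unfold Rdiv at 1. rewrite Rmult_assoc, Rinv_l by lra.
    replace ((f x - eta) / (x - a) * h) with (t * (f x - eta)) by (unfold t; field; lra). lra. }
  lra.
Qed.

Lemma RInt_ge_of (f g : R -> R) p q v : p <= q -> ex_RInt f p q -> is_RInt g p q v ->
  (forall x, p < x < q -> g x <= f x) -> v <= RInt f p q.
Proof.
  intros Hpq Ef Hg H.
  replace v with (RInt g p q) by (apply is_RInt_unique; exact Hg).
  apply RInt_le; auto. exists v; exact Hg.
Qed.

Lemma RInt_le_of (f g : R -> R) p q v : p <= q -> ex_RInt f p q -> is_RInt g p q v ->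
  (forall x, p < x < q -> f x <= g x) -> RInt f p q <= v.
Proof.
  intros Hpq Ef Hg H.
  replace v with (RInt g p q) by (apply is_RInt_unique; exact Hg).
  apply RInt_le; auto. exists v; exact Hg.
Qed.

Lemma gen_unique (f : R -> R) (a l1 l2 : R) :
  is_RInt_gen f (at_point a) (Rbar_locally p_infty) l1 ->
  is_RInt_gen f (at_point a) (Rbar_locally p_infty) l2 -> l1 = l2.
Proof.
  intros H1 H2.
  apply (@is_RInt_gen_unique R_CompleteNormedModule) in H1.
  apply (@is_RInt_gen_unique R_CompleteNormedModule) in H2.
  congruence. all: apply Proper_StrongProper; apply Rbar_locally_filter || apply at_point_filter.
Qed.

Lemma upper (f : R -> R) (a b beta eta nu z : R) :
  a <= b -> 0 < nu -> 0 < eta ->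
  feasible a beta eta nu f ->
  is_RInt_gen (ind_gt b f) (at_point a) (Rbar_locally p_infty) z ->
  z <= (if Rle_dec (eta / nu) (b - a) then beta - eta ^ 2 / (2 * nu)
        else beta - eta * (b - a) + nu * (b - a) ^ 2 / 2).
Proof.
  intros Hab Hnu Heta Hf Hz.
  assert (Hf' := Hf). destruct Hf' as [Hint [_ [_ [_ [_ Hpos]]]]].
  assert (Ez := zformula f a b beta Hab Hint).
  rewrite (gen_unique _ _ _ _ Hz Ez).
  assert (Hlb := lin_lb f a beta eta nu Hf).
  assert (Ex := gen_ex f a beta Hint).
  assert (Hmu : 0 < eta / nu) by (apply Rdiv_lt_0_compat; lra).
  destruct (Rle_dec (eta / nu) (b - a)) as [Hm|Hm].
  - pose (m := a + eta / nu).
    assert (Eab := Ex b Hab).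
    assert (E1 : ex_RInt f a m).
    { apply (@ex_RInt_Chasles_1 R_CompleteNormedModule f a m b); auto. unfold m; lra. }
    assert (E2 : ex_RInt f m b).
    { apply (@ex_RInt_Chasles_2 R_CompleteNormedModule f a m b); auto. unfold m; lra. }
    rewrite <- (RInt_Chasles f a m b E1 E2).
    assert (L1 := RInt_ge_of f _ a m _ ltac:(unfold m; lra) E1 (affine_int eta nu a a m)
                    ltac:(intros x Hx; apply Hlb; lra)).
    assert (L2 := RInt_ge_of f _ m b _ ltac:(unfold m; lra) E2 (is_RInt_zero m b)
                    ltac:(intros x Hx; apply Hpos; unfold m in Hx; lra)).
    unfold plus; simpl.
    replace (eta * (m - a) - nu * ((m - a) ^ 2 - (a - a) ^ 2) / 2) with (eta ^ 2 / (2 * nu)) in L1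
      by (unfold m; field; lra).
    lra.
  - assert (Eab := Ex b Hab).
    assert (L1 := RInt_ge_of f _ a b _ Hab Eab (affine_int eta nu a a b)
                    ltac:(intros x Hx; apply Hlb; lra)).
    replace (eta * (b - a) - nu * ((b - a) ^ 2 - (a - a) ^ 2) / 2) with
      (eta * (b - a) - nu * (b - a) ^ 2 / 2) in L1 by field.
    lra.
Qed.

Definition g (a eta nu t v s x : R) : R :=
  Rmax (Rmax (eta - nu * (x - a)) (v - s * (x - a - t))) 0.

Lemma g_p1 a eta nu t v s x : 0 < t -> 0 < v -> v = eta - nu * t -> 0 < s <= nu ->
  x <= a + t -> g a eta nu t v s x = eta - nu * (x - a).
Proof.
  intros Ht Hv Hvd Hs Hx. unfold g.
  assert (0 <= (nu - s) * (a + t - x)) by (apply Rmult_le_pos; lra).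
  rewrite (Rmax_left (eta - _) _) by nra. rewrite Rmax_left; nra.
Qed.

Lemma g_p2 a eta nu t v s x : 0 < t -> 0 < v -> v = eta - nu * t -> 0 < s <= nu ->
  a + t <= x <= a + t + v / s -> g a eta nu t v s x = v - s * (x - a - t).
Proof.
  intros Ht Hv Hvd Hs Hx. unfold g.
  assert (0 <= (nu - s) * (x - a - t)) by (apply Rmult_le_pos; lra).
  assert (s * (x - a - t) <= s * (v / s)) by (apply Rmult_le_compat_l; lra).
  replace (s * (v / s)) with v in H0 by (field; lra).
  rewrite (Rmax_right (eta - _) _) by nra. rewrite Rmax_left; nra.
Qed.

Lemma g_p3 a eta nu t v s x : 0 < t -> 0 < v -> v = eta - nu * t -> 0 < s <= nu ->
  a + t + v / s <= x -> g a eta nu t v s x = 0.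
Proof.
  intros Ht Hv Hvd Hs Hx. unfold g.
  assert (0 < v / s) by (apply Rdiv_lt_0_compat; lra).
  assert (0 <= (nu - s) * (x - a - t)) by (apply Rmult_le_pos; lra).
  assert (s * (v / s) <= s * (x - a - t)) by (apply Rmult_le_compat_l; lra).
  replace (s * (v / s)) with v in H1 by (field; lra).
  rewrite (Rmax_right (eta - _) _) by nra. rewrite Rmax_right; nra.
Qed.

Lemma g_p4 a eta nu t v s x : 0 < t -> 0 < v -> v = eta - nu * t -> 0 < s <= nu ->
  a + t <= x -> g a eta nu t v s x <= v.
Proof.
  intros Ht Hv Hvd Hs Hx. unfold g.
  apply Rmax_lub; [apply Rmax_lub|]; nra.
Qed.

Lemma g_conv a eta nu t v s : convex_on_from (g a eta nu t v s) a.
Proof.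
  intros x y u _ _ Hu. unfold g.
  set (A1 := eta - nu * (x - a)). set (B1 := v - s * (x - a - t)).
  set (A2 := eta - nu * (y - a)). set (B2 := v - s * (y - a - t)).
  assert (EA : eta - nu * (u * x + (1 - u) * y - a) = u * A1 + (1 - u) * A2)
    by (unfold A1, A2; ring).
  assert (EB : v - s * (u * x + (1 - u) * y - a - t) = u * B1 + (1 - u) * B2)
    by (unfold B1, B2; ring).
  rewrite EA, EB.
  set (M1 := Rmax (Rmax A1 B1) 0). set (M2 := Rmax (Rmax A2 B2) 0).
  assert (a1 : A1 <= M1) by (unfold M1; eapply Rle_trans; [apply Rmax_l| apply Rmax_l]).
  assert (b1 : B1 <= M1) by (unfold M1; eapply Rle_trans; [apply Rmax_r| apply Rmax_l]).
  assert (c1 : 0 <= M1) by (unfold M1; apply Rmax_r).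
  assert (a2 : A2 <= M2) by (unfold M2; eapply Rle_trans; [apply Rmax_l| apply Rmax_l]).
  assert (b2 : B2 <= M2) by (unfold M2; eapply Rle_trans; [apply Rmax_r| apply Rmax_l]).
  assert (c2 : 0 <= M2) by (unfold M2; apply Rmax_r).
  apply Rmax_lub; [apply Rmax_lub|]; nra.
Qed.

Lemma is_RInt_val (f : R -> R) p q (l l' : R) : is_RInt f p q l -> l = l' -> is_RInt f p q l'.
Proof. intros H <-; exact H. Qed.

Lemma g_feasible a beta eta nu t v s :
  0 < t -> 0 < v -> v = eta - nu * t -> 0 < s <= nu ->
  v ^ 2 = 2 * s * (beta - eta * t + nu * t ^ 2 / 2) ->
  feasible a beta eta nu (g a eta nu t v s).
Proof.
  intros Ht Hv Hvd Hs Hdef.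
  assert (Hvs : 0 < v / s) by (apply Rdiv_lt_0_compat; lra).
  set (c := a + t + v / s).
  assert (I1 : is_RInt (g a eta nu t v s) a (a + t) (eta * t - nu * t ^ 2 / 2)).
  { eapply is_RInt_val; [eapply (@is_RInt_ext R_NormedModule); [| apply (affine_int eta nu a a (a + t))]|].
    - intros x Hx. rewrite Rmin_left in Hx by lra. rewrite Rmax_right in Hx by lra.
      symmetry. apply g_p1; auto; lra.
    - field. }
  assert (I2 : is_RInt (g a eta nu t v s) (a + t) c (beta - eta * t + nu * t ^ 2 / 2)).
  { eapply is_RInt_val; [eapply (@is_RInt_ext R_NormedModule); [| apply (affine_int v s (a + t) (a + t) c)]|].
    - intros x Hx. rewrite Rmin_left in Hx by (unfold c; lra). rewrite Rmax_right in Hx by (unfold c; lra).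
      symmetry. replace (x - (a + t)) with (x - a - t) by ring. apply g_p2; auto; unfold c in *; lra.
    - unfold c. apply Rmult_eq_reg_l with (2 * s); [|lra]. rewrite <- Hdef. field. lra. }
  assert (I3 : forall y, c < y -> is_RInt (g a eta nu t v s) c y 0).
  { intros y Hy. eapply (@is_RInt_ext R_NormedModule); [| apply is_RInt_zero].
    intros x Hx. rewrite Rmin_left in Hx by lra. rewrite Rmax_right in Hx by lra.
    symmetry. apply g_p3; auto; unfold c in *; lra. }
  assert (Hga : g a eta nu t v s a = eta).
  { rewrite g_p1; auto; lra. }
  assert (Hloc : forall P : R -> Prop, (forall h, 0 < h < t -> P h) -> at_right 0 P).
  { intros P HP. exists (mkposreal t Ht). intros y Hy Hy0. apply HP. split; auto.
    unfold ball in Hy; simpl in Hy; unfold AbsRing_ball, abs, minus, plus, opp in Hy; simpl in Hy.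
    rewrite Ropp_0, Rplus_0_r, Rabs_right in Hy; lra. }
  split; [|split; [exact Hga|split; [|split; [|split]]]].
  - intros P HP. apply Filter_prod with (fun x => x = a) (fun y => c < y).
    + reflexivity.
    + exists c. auto.
    + intros x y -> Hy. exists beta. split.
      * replace beta with (plus (plus (eta * t - nu * t ^ 2 / 2) (beta - eta * t + nu * t ^ 2 / 2)) 0)
          by (unfold plus; simpl; ring).
        apply (@is_RInt_Chasles R_NormedModule) with c; [apply (@is_RInt_Chasles R_NormedModule) with (a + t)|]; auto.
      * apply locally_singleton. exact HP.
  - apply (filterlim_ext_loc (fun x => eta - nu * (x - a))).
    + exists (mkposreal t Ht). intros y Hy Hy0. simpl in Hy0.
      unfold ball in Hy; simpl in Hy; unfold AbsRing_ball, abs, minus, plus, opp in Hy; simpl in Hy.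
      rewrite Rabs_right in Hy by lra. symmetry. apply g_p1; auto; lra.
    + apply (filterlim_filter_le_1 _ (filter_le_within _)).
      assert (C : continuous (fun x => eta - nu * (x - a)) a).
      { apply (ex_derive_continuous (fun x => eta - nu * (x - a))). auto_derive; auto. }
      unfold continuous in C. replace (eta - nu * (a - a)) with eta in C by ring. exact C.
  - exists (Finite (- nu)). split; [|simpl; lra].
    apply (filterlim_ext_loc (fun _ => - nu)).
    + apply Hloc. intros h Hh. rewrite Hga, g_p1 by (auto; lra). field. lra.
    + apply filterlim_const.
  - apply g_conv.
  - intros x _. unfold g. apply Rmax_r.

Qed.

Lemma construct (beta eta nu t : R) : 0 < nu -> 0 < eta -> eta ^ 2 < 2 * beta * nu ->
  0 < t -> t < eta / nu ->
  exists v s, 0 < v /\ v = eta - nu * t /\ 0 < s <= nu /\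
     v ^ 2 = 2 * s * (beta - eta * t + nu * t ^ 2 / 2).
Proof.
  intros Hn He Hsq Ht Htm.
  assert (Hnt : nu * t < eta).
  { apply Rmult_lt_compat_l with (r := nu) in Htm; auto.
    replace (nu * (eta / nu)) with eta in Htm by (field; lra). lra. }
  set (Rr := beta - eta * t + nu * t ^ 2 / 2).
  assert (HR : 2 * nu * Rr - (eta - nu * t) ^ 2 = 2 * beta * nu - eta ^ 2) by (unfold Rr; field).
  assert (HRp : 0 < Rr) by nra.
  exists (eta - nu * t), ((eta - nu * t) ^ 2 / (2 * Rr)).
  split; [lra|split; [reflexivity|split;[split|]]].
  - apply Rdiv_lt_0_compat; nra.
  - apply Rmult_le_reg_r with (2 * Rr); [lra|].
    unfold Rdiv. rewrite Rmult_assoc, Rinv_l, Rmult_1_r by lra. nra.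
  - field. lra.
Qed.

Lemma g_int2 a b eta nu t v s : 0 < t -> 0 < v -> v = eta - nu * t -> 0 < s <= nu ->
  a <= b -> b - a <= t ->
  RInt (g a eta nu t v s) a b = eta * (b - a) - nu * (b - a) ^ 2 / 2.
Proof.
  intros Ht Hv Hvd Hs Hab Hbt. apply is_RInt_unique.
  eapply is_RInt_val; [eapply (@is_RInt_ext R_NormedModule); [| apply (affine_int eta nu a a b)]|].
  - intros x Hx. rewrite Rmin_left in Hx by lra. rewrite Rmax_right in Hx by lra.
    symmetry. apply g_p1; auto; lra.
  - field.
Qed.

Lemma g_int1 a b eta nu t v s : 0 < t -> 0 < v -> v = eta - nu * t -> 0 < s <= nu ->
  t <= b - a -> ex_RInt (g a eta nu t v s) a b ->
  RInt (g a eta nu t v s) a b <= (eta * t - nu * t ^ 2 / 2) + v * (b - a - t).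
Proof.
  intros Ht Hv Hvd Hs Htb Ex.
  assert (E1 : ex_RInt (g a eta nu t v s) a (a + t)).
  { apply (@ex_RInt_Chasles_1 R_CompleteNormedModule _ a (a + t) b); auto. lra. }
  assert (E2 : ex_RInt (g a eta nu t v s) (a + t) b).
  { apply (@ex_RInt_Chasles_2 R_CompleteNormedModule _ a (a + t) b); auto. lra. }
  rewrite <- (RInt_Chasles _ a (a + t) b E1 E2).
  assert (L1 : RInt (g a eta nu t v s) a (a + t) = eta * t - nu * t ^ 2 / 2).
  { apply is_RInt_unique.
    eapply is_RInt_val; [eapply (@is_RInt_ext R_NormedModule); [| apply (affine_int eta nu a a (a + t))]|].
    - intros x Hx. rewrite Rmin_left in Hx by lra. rewrite Rmax_right in Hx by lra.
      symmetry. apply g_p1; auto; lra.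
    - field. }
  assert (L2 : RInt (g a eta nu t v s) (a + t) b <= v * (b - (a + t)) - 0 * ((b - 0) ^ 2 - (a + t - 0) ^ 2) / 2).
  { apply (RInt_le_of _ (fun x => v - 0 * (x - 0))); auto. lra. apply affine_int.
    intros x Hx. replace (v - 0 * (x - 0)) with v by ring. apply g_p4; auto; lra. }
  unfold plus; simpl. rewrite L1.
  replace (v * (b - (a + t)) - 0 * ((b - 0) ^ 2 - (a + t - 0) ^ 2) / 2) with (v * (b - a - t)) in L2 by field.
  lra.
Qed.

Theorem theorem3 (a b beta eta nu : R) :
  a <= b -> 0 < beta -> 0 < eta -> 0 < nu -> eta ^ 2 < 2 * beta * nu ->
  let mu := eta / nu in
  let sigma := 2 * beta / nu in
  zstar a b beta eta nu =
    Finite (if Rle_dec mu (b - a)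
            then nu / 2 * (sigma - mu ^ 2)
            else nu / 2 * (sigma - 2 * (b - a) * mu + (b - a) ^ 2)).
Proof.
  intros Hab Hb He Hn Hsq mu sigma. unfold mu, sigma.
  assert (Key : forall V, (forall z, objective_values a b beta eta nu z -> z <= V) ->
     (forall M, M < V -> exists z, objective_values a b beta eta nu z /\ M < z) ->
     zstar a b beta eta nu = Finite V).
  { intros V U A. unfold zstar. apply is_lub_Rbar_unique. split.
    - intros z Hz. simpl. apply U; auto.
    - intros [M| |] HM; simpl.
      + destruct (Rle_lt_dec V M) as [r|r]; auto.
        destruct (A M r) as [z [Hz Hlt]]. specialize (HM z Hz). simpl in HM. lra.
      + exact I.
      + destruct (A (V - 1)) as [z [Hz _]]. lra. exact (HM z Hz). }
  assert (Hmu : 0 < eta / nu) by (apply Rdiv_lt_0_compat; lra).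
  assert (Vobj : forall t, 0 < t -> t < eta / nu ->
     exists v s, 0 < v /\ v = eta - nu * t /\ 0 < s <= nu /\
       objective_values a b beta eta nu (beta - RInt (g a eta nu t v s) a b) /\
       ex_RInt (g a eta nu t v s) a b).
  { intros t Ht Htm.
    destruct (construct beta eta nu t Hn He Hsq Ht Htm) as [v [s [Hv [Hvd [Hs Hdef]]]]].
    exists v, s. assert (F := g_feasible a beta eta nu t v s Ht Hv Hvd Hs Hdef).
    split; auto. split; auto. split; auto. split.
    - exists (g a eta nu t v s). split; auto. apply zformula; auto. apply F.
    - apply (gen_ex _ a beta); auto. apply F. }
  assert (UB := fun z (Hz : objective_values a b beta eta nu z) =>
     match Hz with ex_intro f (conj Hf Hi) => upper f a b beta eta nu z Hab Hn He Hf Hi end).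
  destruct (Rle_dec (eta / nu) (b - a)) as [H1|H1]; apply Key.
  - intros z Hz. assert (U := UB z Hz). destruct (Rle_dec (eta / nu) (b - a)); [|contradiction].
    replace (nu / 2 * (2 * beta / nu - (eta / nu) ^ 2)) with (beta - eta ^ 2 / (2 * nu)) by (field; lra).
    exact U.
  - intros M HM.
    set (V1 := nu / 2 * (2 * beta / nu - (eta / nu) ^ 2)) in *.
    assert (EV : V1 = beta - eta ^ 2 / (2 * nu)) by (unfold V1; field; lra).
    set (d := b - a) in *.
    set (eps := V1 - M).
    assert (Heps : 0 < eps) by (unfold eps; lra).
    set (del := Rmin (eta / nu / 2) (eps / (nu * (d + 1)))).
    assert (Hd0 : 0 <= d) by (unfold d; lra).
    assert (Hdel : 0 < del).
    { unfold del. apply Rmin_pos. lra. apply Rdiv_lt_0_compat; nra. }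
    assert (Hdel1 : del <= eta / nu / 2) by apply Rmin_l.
    assert (Hdel2 : del <= eps / (nu * (d + 1))) by apply Rmin_r.
    set (t := eta / nu - del).
    destruct (Vobj t ltac:(unfold t; lra) ltac:(unfold t; lra)) as [v [s [Hv [Hvd [Hs [Ho Ex]]]]]].
    exists (beta - RInt (g a eta nu t v s) a b). split; auto.
    assert (I := g_int1 a b eta nu t v s ltac:(unfold t; lra) Hv Hvd Hs ltac:(unfold t, d in *; lra) Ex).
    fold d in I.
    assert (Q1 : eta * t - nu * t ^ 2 / 2 <= eta ^ 2 / (2 * nu)).
    { assert (E : eta ^ 2 / (2 * nu) - (eta * t - nu * t ^ 2 / 2) = (eta - nu * t) ^ 2 / (2 * nu))
        by (field; lra).
      assert (0 <= (eta - nu * t) ^ 2 / (2 * nu)).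
      { apply Rmult_le_pos. nra. apply Rlt_le, Rinv_0_lt_compat; lra. }
      lra. }
    assert (Hvdel : v = nu * del) by (rewrite Hvd; unfold t; field; lra).
    assert (Q2 : v * (d - t) < eps).
    { rewrite Hvdel.
      assert (nu * del * (d - t) <= nu * del * d).
      { apply Rmult_le_compat_l. nra. unfold t; lra. }
      assert (nu * del <= eps / (d + 1)).
      { apply Rmult_le_reg_l with (/ nu). apply Rinv_0_lt_compat; lra.
        replace (/ nu * (nu * del)) with del by (field; lra).
        replace (/ nu * (eps / (d + 1))) with (eps / (nu * (d + 1))) by (field; lra). lra. }
      assert (eps / (d + 1) * d < eps).
      { replace (eps / (d + 1) * d) with (eps - eps / (d + 1)) by (field; lra).
        assert (0 < eps / (d + 1)) by (apply Rdiv_lt_0_compat; lra). lra. }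
      assert (nu * del * d <= eps / (d + 1) * d) by (apply Rmult_le_compat_r; lra).
      lra. }
    unfold eps in Q2. lra.
  - intros z Hz. assert (U := UB z Hz). destruct (Rle_dec (eta / nu) (b - a)); [contradiction|].
    replace (nu / 2 * (2 * beta / nu - 2 * (b - a) * (eta / nu) + (b - a) ^ 2))
      with (beta - eta * (b - a) + nu * (b - a) ^ 2 / 2) by (field; lra).
    exact U.
  - intros M HM.
    set (t := (b - a + eta / nu) / 2).
    destruct (Vobj t ltac:(unfold t; lra) ltac:(unfold t; lra)) as [v [s [Hv [Hvd [Hs [Ho Ex]]]]]].
    exists (beta - RInt (g a eta nu t v s) a b). split; auto.
    rewrite (g_int2 a b eta nu t v s ltac:(unfold t; lra) Hv Hvd Hs Hab ltac:(unfold t; lra)).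
    replace (nu / 2 * (2 * beta / nu - 2 * (b - a) * (eta / nu) + (b - a) ^ 2))
      with (beta - eta * (b - a) + nu * (b - a) ^ 2 / 2) in HM by (field; lra).
    lra.
Qed.
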